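(* Let $\mathcal{R}:\mathcal{D}\to\mathcal{S}$ be a deletion $(\varepsilon,\delta)$-DP local randomizer with reference distribution $\rho$. Then there exists a randomizer $\mathcal{R}':\mathcal{D}\to\mathcal{S}$ that is a deletion $\varepsilon$-DP local randomizer with the same reference distribution $\rho$, such that for all $x\in\mathcal{D}$, $\mathrm{TV}(\mathcal{R}(x),\mathcal{R}'(x))\le\delta$. In particular, $\mathcal{R}'$ is a (replacement) $2\varepsilon$-DP local randomizer.
   Context: Two random variables $P,Q$ on the same space are $(\varepsilon,\delta)$-indistinguishable if for every event $E$, $e^{-\varepsilon}(\Pr(Q\in E)-\delta)\le\Pr(P\in E)\le e^{\varepsilon}\Pr(Q\in E)+\delta$. An algorithm $\mathcal{R}:\mathcal{D}\to\mathcal{S}$ is a deletion $(\varepsilon,\delta)$-DP local randomizer if there exists a distribution $\rho$ on $\mathcal{S}$ (the reference distribution) such that for all $x\in\mathcal{D}$, $\mathcal{R}(x)$ and $\rho$ are $(\varepsilon,\delta)$-indistinguishable; deletion $\varepsilon$-DP means $\delta=0$. A (replacement) $(\varepsilon,\delta)$-DP local randomizer is one for which $\mathcal{R}(x)$ and $\mathcal{R}(x')$ are $(\varepsilon,\delta)$-indistinguishable for all $x,x'\in\mathcal{D}$. $\mathrm{TV}$ denotes total variation distance. *)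

(* Defs.v *)
From HB Require Import structures.
From mathcomp Require Import all_boot all_order all_algebra.
From mathcomp Require Import all_classical all_reals all_analysis.
Set Implicit Arguments. Unset Strict Implicit. Unset Printing Implicit Defensive.
Import Order.TTheory GRing.Theory Num.Theory.
Local Open Scope classical_set_scope.
Local Open Scope ring_scope.
Local Open Scope ereal_scope.

(* Output space S is an arbitrary measurable space T; distributions on S are
   probability measures on T; events are measurable sets. *)

Definition indist {R : realType} {d : measure_display} {T : measurableType d}
  (P Q : probability T R) (eps delta : R) : Prop :=
  forall E : set T, measurable E ->
    (expR (- eps))%:E * (Q E - delta%:E) <= P E /\
    P E <= (expR eps)%:E * Q E + delta%:E.

Definition TV {R : realType} {d : measure_display} {T : measurableType d}
  (P Q : probability T R) : \bar R :=
  ereal_sup [set `|P E - Q E| | E in [set E : set T | measurable E]].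

Definition deletion_ldp_ref {R : realType} {d : measure_display}
  {T : measurableType d} {D : Type}
  (M : D -> probability T R) (rho : probability T R) (eps delta : R) : Prop :=
  forall x : D, indist (M x) rho eps delta.

Definition replacement_ldp {R : realType} {d : measure_display}
  {T : measurableType d} {D : Type}
  (M : D -> probability T R) (eps delta : R) : Prop :=
  forall x x' : D, indist (M x) (M x') eps delta.

(* Main.v *)
Require Import Defs.
From HB Require Import structures.
From mathcomp Require Import all_boot all_order all_algebra.
From mathcomp Require Import all_classical all_reals all_analysis.
From mathcomp Require Import ring lra.

Import Order.TTheory GRing.Theory Num.Theory.
Local Open Scope classical_set_scope.
Local Open Scope ring_scope.
Local Open Scope ereal_scope.

Section helpers.
Context (R : realType) (d : measure_display) (T : measurableType d).

Definition pr (P : probability T R) (E : set T) : R := fine (P E).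

Lemma prE (P : probability T R) E : measurable E -> P E = (pr P E)%:E.
Proof. by move=> mE; rewrite /pr fineK // fin_num_measure. Qed.

Lemma pr_ge0 (P : probability T R) E : (0 <= pr P E)%R.
Proof. by rewrite /pr fine_ge0. Qed.

Lemma prT (P : probability T R) : pr P setT = 1%R.
Proof. by rewrite /pr probability_setT. Qed.

Lemma pr_split (P : probability T R) E S : measurable E -> measurable S ->
  pr P E = (pr P (E `&` S) + pr P (E `\` S))%R.
Proof.
move=> mE mS.
have mI : measurable (E `&` S) by exact: measurableI.
have mD : measurable (E `\` S) by exact: measurableD.
have : P E = P (E `&` S) + P (E `\` S).
  rewrite -measureU //; first by rewrite setUIDK.
  by rewrite setDE setIACA setICr setI0.
by rewrite (prE _ _ mE) (prE _ _ mI) (prE _ _ mD) -EFinD => -[].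
Qed.

Lemma pr_setC (P : probability T R) E : measurable E ->
  pr P (~` E) = (1 - pr P E)%R.
Proof. by move=> mE; rewrite /pr probability_setC // (prE _ _ mE). Qed.

Lemma indist_real (P Q : probability T R) eps delta :
  indist P Q eps delta <-> forall E, measurable E ->
    (expR (- eps) * (pr Q E - delta) <= pr P E /\ pr P E <= expR eps * pr Q E + delta)%R.
Proof.
split=> H E mE; have := H E mE; rewrite (prE P _ mE) (prE Q _ mE).
  by rewrite -EFinB -EFinM -EFinM -EFinD !lee_fin.
by rewrite -EFinB -EFinM -EFinM -EFinD !lee_fin.
Qed.

Lemma TV_le (P Q : probability T R) delta :
  (forall E, measurable E -> `|pr P E - pr Q E| <= delta)%R -> TV P Q <= delta%:E.
Proof.
move=> H; apply: ge_ereal_sup => _ [E mE <-].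
by rewrite (prE P _ mE) (prE Q _ mE) -EFinB abse_EFin lee_fin; exact: H.
Qed.

Lemma mnormalize_val (mu : {measure set T -> \bar R}) (P : probability T R) U :
  mu setT = 1 -> mnormalize mu P U = mu U.
Proof.
by move=> h; rewrite /mnormalize h /= onee_eq0 /= invr1 mule1.
Qed.

Lemma mk_prob (P rho : probability T R) (A B M : set T)
  (mA : measurable A) (mB : measurable B) (mM : measurable M) (a b c k : R) :
  (0 <= a)%R -> (0 <= b)%R -> (0 <= c)%R -> (0 <= k)%R ->
  (a * pr rho A + b * pr rho B + c * pr rho M + k * pr P M = 1)%R ->
  exists Q : probability T R, forall E, measurable E ->
    pr Q E = (a * pr rho (E `&` A) + b * pr rho (E `&` B)
              + c * pr rho (E `&` M) + k * pr P (E `&` M))%R.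
Proof.
move=> ha hb hc hk h1.
pose mu := measure_add
  (measure_add (mscale (NngNum ha) (mrestr rho mA)) (mscale (NngNum hb) (mrestr rho mB)))
  (measure_add (mscale (NngNum hc) (mrestr rho mM)) (mscale (NngNum hk) (mrestr P mM))).
have muE E : measurable E -> mu E = (a * pr rho (E `&` A) + b * pr rho (E `&` B)
              + c * pr rho (E `&` M) + k * pr P (E `&` M))%:E.
  move=> mE; rewrite /mu /measure_add /msum /= !big_ord_recl !big_ord0 /=.
  rewrite /msum !big_ord_recl !big_ord0 /mscale /mrestr /= !adde0; unfold mscale; simpl; unfold mrestr.
  rewrite (prE rho _ (measurableI _ _ mE mA)) (prE rho _ (measurableI _ _ mE mB)).
  rewrite (prE rho _ (measurableI _ _ mE mM)) (prE P _ (measurableI _ _ mE mM)).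
  by rewrite -!EFinM -!EFinD addrA.
have muT : mu setT = 1.
  by rewrite muE // !setTI h1.
exists (mnormalize mu rho) => E mE.
rewrite /pr /= mnormalize_val //.
exact: (congr1 fine (muE _ mE)).
Qed.

Section mainone.
Local Open Scope ring_scope.

Lemma decomp3 (Q : probability T R) (S1 S2 E : set T) :
  measurable S1 -> measurable S2 -> measurable E ->
  pr Q E = pr Q (E `&` S1) + pr Q (E `&` (~` S1 `&` S2))
           + pr Q (E `&` (~` S1 `&` ~` S2)).
Proof.
move=> m1 m2 mE.
rewrite (pr_split Q _ _ mE m1) (pr_split Q _ _ (measurableD mE m1) m2).
by rewrite !setDE !setIA addrA.
Qed.

Lemma main_one (P rho : probability T R) (eps delta : R) :
  0 <= eps -> 0 <= delta -> indist P rho eps delta ->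
  exists Q : probability T R, indist Q rho eps 0 /\
    (forall E, measurable E -> `|pr P E - pr Q E| <= delta).
Proof.
move=> he hd /indist_real HI.
set al := expR eps; set be := expR (- eps).
have al1 : 1 <= al by have := expR_ge1Dx eps; rewrite -/al; lra.
have be1 : be <= 1 by rewrite /be expR_le1; lra.
have be0 : 0 < be by exact: expR_gt0.
have albe : al * be = 1 by exact: expRxMexpNx_1.
have [S1 [N1 [[mS1 pS1] [mN1 nN1] UN1 IN1]]] := Hahn_decomposition
  (cadd (charge_of_finite_measure P) (cscale (- al) (charge_of_finite_measure rho))).
have [S2 [N2 [[mS2 pS2] [mN2 nN2] UN2 IN2]]] := Hahn_decomposition
  (cadd (cscale be (charge_of_finite_measure rho)) (cscale (-1) (charge_of_finite_measure P))).
have F1 E : measurable E -> E `<=` S1 -> al * pr rho E <= pr P E.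
  move=> mE sE; have : (0 <= P E + (- al)%:E * rho E)%E := pS1 E mE sE.
  by rewrite (prE P _ mE) (prE rho _ mE) -EFinM -EFinD lee_fin; lra.
have F1' E : measurable E -> E `<=` ~` S1 -> pr P E <= al * pr rho E.
  move=> mE sE.
  have sN : E `<=` N1.
    move=> x Ex; have : (S1 `|` N1) x by rewrite UN1.
    by case=> // /(sE x Ex).
  have : (P E + (- al)%:E * rho E <= 0)%E := nN1 E mE sN.
  by rewrite (prE P _ mE) (prE rho _ mE) -EFinM -EFinD lee_fin; lra.
have F2 E : measurable E -> E `<=` S2 -> pr P E <= be * pr rho E.
  move=> mE sE; have : (0 <= be%:E * rho E + (-1)%:E * P E)%E := pS2 E mE sE.
  by rewrite (prE P _ mE) (prE rho _ mE) -!EFinM -EFinD lee_fin; lra.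
have F2' E : measurable E -> E `<=` ~` S2 -> be * pr rho E <= pr P E.
  move=> mE sE.
  have sN : E `<=` N2.
    move=> x Ex; have : (S2 `|` N2) x by rewrite UN2.
    by case=> // /(sE x Ex).
  have : (be%:E * rho E + (-1)%:E * P E <= 0)%E := nN2 E mE sN.
  by rewrite (prE P _ mE) (prE rho _ mE) -!EFinM -EFinD lee_fin; lra.
set A := S1; set B := ~` S1 `&` S2; set M := ~` S1 `&` ~` S2.
have mA : measurable A by [].
have mB : measurable B by apply: measurableI => //; exact: measurableC.
have mM : measurable M by apply: measurableI; exact: measurableC.
have dec Q E : measurable E -> pr Q E = pr Q (E `&` A) + pr Q (E `&` B) + pr Q (E `&` M).
  by move=> mE; exact: decomp3.
have tot Q : pr Q A + pr Q B + pr Q M = 1.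
  by rewrite -(prT Q) (dec Q setT) // !setTI.
have sA E : E `&` A `<=` S1 by move=> x [].
have sB1 E : E `&` B `<=` ~` S1 by move=> x [_ []].
have sB2 E : E `&` B `<=` S2 by move=> x [_ []].
have sM1 E : E `&` M `<=` ~` S1 by move=> x [_ []].
have sM2 E : E `&` M `<=` ~` S2 by move=> x [_ []].
have monoA E : measurable E ->
    pr P (E `&` A) - al * pr rho (E `&` A) <= pr P A - al * pr rho A.
  move=> mE; rewrite (pr_split P _ _ mA mE) (pr_split rho _ _ mA mE) !(setIC A).
  have := F1 (A `\` E) (measurableD mA mE) (fun x => (@proj1 _ _)); lra.
have monoB E : measurable E ->
    be * pr rho (E `&` B) - pr P (E `&` B) <= be * pr rho B - pr P B.
  move=> mE; rewrite (pr_split P _ _ mB mE) (pr_split rho _ _ mB mE) !(setIC B).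
  have := F2 (B `\` E) (measurableD mB mE) (fun x h => sB2 setT x (conj I (proj1 h))); lra.
have A0d : pr P A - al * pr rho A <= delta  by have [_ h] := HI A mA; rewrite -/al in h; lra.
have B0d : be * pr rho B - pr P B <= delta.
  have [h _] := HI B mB; rewrite -/be in h.
  have : be * delta <= delta by rewrite -[X in _ <= X]mul1r ler_wpM2r.
  lra.
have fin (Q : probability T R) :
    (forall E, measurable E -> be * pr rho E <= pr Q E /\ pr Q E <= al * pr rho E) ->
    ((forall E, measurable E -> pr P E - pr Q E <= delta) \/
     (forall E, measurable E -> pr Q E - pr P E <= delta)) ->
    exists Q : probability T R, indist Q rho eps 0 /\
      (forall E, measurable E -> `|pr P E - pr Q E| <= delta).
  move=> band tv; exists Q; split.
    apply/indist_real => E mE; have [h1 h2] := band E mE.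
    by rewrite -/al -/be; split; lra.
  move=> E mE; rewrite ler_norml.
  have mCE : measurable (~` E) by exact: measurableC.
  have hP := pr_setC P _ mE; have hQ := pr_setC Q _ mE.
  case: tv => tv; have h1 := tv E mE; have h2 := tv _ mCE; apply/andP; split; lra.
have r0 E : 0 <= pr rho E by exact: pr_ge0.
have p0 E : 0 <= pr P E by exact: pr_ge0.
have totP := tot P; have totr := tot rho.
have e3 : pr rho M = 1 - pr rho A - pr rho B by lra.
have albe' : be <= al by lra.
set C := al * pr rho A + be * pr rho B + pr P M.
case: (lerP C 1) => C1.
- pose t := (1 - C) / (al - C).
  have [t0 [t1 ht]] : 0 <= t /\ t <= 1 /\ t * (al - C) = 1 - C.
    have [aC|aC] := eqVneq (al - C) 0.
      rewrite /t aC invr0 mulr0; split => //; split => //; lra.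
    have aC' : 0 < al - C by rewrite lt_neqAle eq_sym aC /=; lra.
    split; first by apply: divr_ge0; lra.
    split; last by rewrite /t divfK.
    by rewrite /t ler_pdivrMr // mul1r; lra.
  have := @mk_prob P rho A B M mA mB mM al ((1 - t) * be + t * al) (t * al) (1 - t).
  case.
  + lra.
  + apply: addr_ge0; apply: mulr_ge0; lra.
  + apply: mulr_ge0; lra.
  + lra.
  + have -> : al * pr rho A + ((1 - t) * be + t * al) * pr rho B + t * al * pr rho M +
        (1 - t) * pr P M = C + t * (al - C) by rewrite e3 /C; ring.
    by rewrite ht; ring.
  move=> Q qE; apply: (fin Q).
  + move=> E mE; rewrite qE // (dec rho E mE).
    set x1 := pr rho (E `&` A); set x2 := pr rho (E `&` B); set x3 := pr rho (E `&` M).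
    set y3 := pr P (E `&` M).
    have y3l : be * x3 <= y3 by exact: (F2' _ (measurableI _ _ mE mM) (sM2 E)).
    have y3u : y3 <= al * x3 by exact: (F1' _ (measurableI _ _ mE mM) (sM1 E)).
    have := r0 (E `&` A); have := r0 (E `&` B); have := r0 (E `&` M); rewrite -/x1 -/x2 -/x3 => h3 h2 h1.
    have p1 : 0 <= (al - be) * x1 by apply: mulr_ge0; lra.
    have p2 : 0 <= t * ((al - be) * x2) by apply: mulr_ge0 => //; apply: mulr_ge0; lra.
    have p3 : 0 <= t * ((al - be) * x3) by apply: mulr_ge0 => //; apply: mulr_ge0; lra.
    have p4 : 0 <= (1 - t) * (y3 - be * x3) by apply: mulr_ge0; lra.
    have p5 : 0 <= (1 - t) * ((al - be) * x2) by apply: mulr_ge0; [lra|apply: mulr_ge0; lra].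
    have p6 : 0 <= (1 - t) * (al * x3 - y3) by apply: mulr_ge0; lra.
    split; lra.
  + left => E mE; rewrite qE // (dec P E mE).
    set x1 := pr rho (E `&` A); set x2 := pr rho (E `&` B); set x3 := pr rho (E `&` M).
    set y3 := pr P (E `&` M).
    have y3u : y3 <= al * x3 by exact: (F1' _ (measurableI _ _ mE mM) (sM1 E)).
    have y2u : pr P (E `&` B) <= be * x2 by exact: (F2 _ (measurableI _ _ mE mB) (sB2 E)).
    have := monoA E mE; rewrite -/x1 => hA.
    have h2 := r0 (E `&` B); rewrite -/x2 in h2.
    have p2 : 0 <= t * ((al - be) * x2) by apply: mulr_ge0 => //; apply: mulr_ge0; lra.
    have p7 : 0 <= t * (al * x3 - y3) by apply: mulr_ge0; lra.
    lra.
- pose t := (C - 1) / (C - be).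
  have Cb : 0 < C - be by lra.
  have [t0 [t1 ht]] : 0 <= t /\ t <= 1 /\ t * (C - be) = C - 1.
    split; first by apply: divr_ge0; lra.
    split; last by rewrite /t divfK // gt_eqF.
    by rewrite /t ler_pdivrMr // mul1r; lra.
  have := @mk_prob P rho A B M mA mB mM ((1 - t) * al + t * be) be (t * be) (1 - t).
  case.
  + apply: addr_ge0; apply: mulr_ge0; lra.
  + lra.
  + apply: mulr_ge0; lra.
  + lra.
  + have -> : ((1 - t) * al + t * be) * pr rho A + be * pr rho B + t * be * pr rho M +
        (1 - t) * pr P M = C - t * (C - be) by rewrite e3 /C; ring.
    by rewrite ht; ring.
  move=> Q qE; apply: (fin Q).
  + move=> E mE; rewrite qE // (dec rho E mE).
    set x1 := pr rho (E `&` A); set x2 := pr rho (E `&` B); set x3 := pr rho (E `&` M).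
    set y3 := pr P (E `&` M).
    have y3l : be * x3 <= y3 by exact: (F2' _ (measurableI _ _ mE mM) (sM2 E)).
    have y3u : y3 <= al * x3 by exact: (F1' _ (measurableI _ _ mE mM) (sM1 E)).
    have := r0 (E `&` A); have := r0 (E `&` B); have := r0 (E `&` M); rewrite -/x1 -/x2 -/x3 => h3 h2 h1.
    have q1 : 0 <= (1 - t) * ((al - be) * x1) by apply: mulr_ge0; [lra|apply: mulr_ge0; lra].
    have q2 : 0 <= (1 - t) * (y3 - be * x3) by apply: mulr_ge0; lra.
    have q3 : 0 <= t * ((al - be) * x1) by apply: mulr_ge0 => //; apply: mulr_ge0; lra.
    have q4 : 0 <= (al - be) * x2 by apply: mulr_ge0; lra.
    have q5 : 0 <= t * ((al - be) * x3) by apply: mulr_ge0 => //; apply: mulr_ge0; lra.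
    have q6 : 0 <= (1 - t) * (al * x3 - y3) by apply: mulr_ge0; lra.
    split; lra.
  + right => E mE; rewrite qE // (dec P E mE).
    set x1 := pr rho (E `&` A); set x2 := pr rho (E `&` B); set x3 := pr rho (E `&` M).
    set y3 := pr P (E `&` M).
    have y3l : be * x3 <= y3 by exact: (F2' _ (measurableI _ _ mE mM) (sM2 E)).
    have y1l : al * x1 <= pr P (E `&` A) by exact: (F1 _ (measurableI _ _ mE mA) (sA E)).
    have := monoB E mE; rewrite -/x2 => hB.
    have h1 := r0 (E `&` A); rewrite -/x1 in h1.
    have q3 : 0 <= t * ((al - be) * x1) by apply: mulr_ge0 => //; apply: mulr_ge0; lra.
    have q7 : 0 <= t * (y3 - be * x3) by apply: mulr_ge0; lra.
    lra.
Qed.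

Lemma repl_step (Q1 Q2 rho : probability T R) (eps : R) :
  indist Q1 rho eps 0 -> indist Q2 rho eps 0 -> indist Q1 Q2 (2 * eps) 0.
Proof.
move=> H1 H2; apply/indist_real => E mE.
have [h1 h2] := (indist_real _ _ _ _).1 H1 E mE.
have [h3 h4] := (indist_real _ _ _ _).1 H2 E mE.
set al := expR eps in h1 h2 h3 h4 *; set be := expR (- eps) in h1 h2 h3 h4 *.
have albe : al * be = 1 by exact: expRxMexpNx_1.
have al0 : 0 <= al by exact: expR_ge0.
have be0 : 0 <= be by exact: expR_ge0.
have -> : expR (2 * eps) = al * al by rewrite -expRD; congr expR; ring.
have -> : expR (- (2 * eps)) = be * be by rewrite -expRD; congr expR; ring.
have r0 := pr_ge0 rho E.
set q := pr Q1 E in h1 h2 *; set q' := pr Q2 E in h3 h4 *.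
set r := pr rho E in h1 h2 h3 h4 r0 *.
rewrite !subr0 !addr0 in h1 h2 h3 h4 *.
have k1 : r <= al * q'.
  have := ler_wpM2l al0 h3; rewrite mulrA albe mul1r; lra.
have k2 : r <= al * q.
  have := ler_wpM2l al0 h1; rewrite mulrA albe mul1r; lra.
split.
- have := ler_wpM2l be0 k2; rewrite mulrA (mulrC be al) albe mul1r => k3.
  have := ler_wpM2l be0 h4; rewrite mulrA (mulrC be al) albe mul1r => k4.
  have := ler_wpM2l be0 k4; rewrite mulrA => k5. lra.
- have := ler_wpM2l al0 k1; rewrite mulrA => k3. lra.
Qed.

End mainone.

End helpers.

Theorem lemma3p7 (R : realType) (d : measure_display) (T : measurableType d)
  (D : Type) (M : D -> probability T R) (rho : probability T R) (eps delta : R) :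
  (0 <= eps)%R -> (0 <= delta)%R ->
  deletion_ldp_ref M rho eps delta ->
  exists M' : D -> probability T R,
    deletion_ldp_ref M' rho eps 0 /\
    (forall x : D, TV (M x) (M' x) <= delta%:E) /\
    replacement_ldp M' (2 * eps) 0.
Proof.
move=> he hd H.
have [M' HM'] := choice (fun x => @main_one _ _ _ _ _ _ _ he hd (H x)).
exists M'; split; [|split].
- by move=> x; exact: (HM' x).1.
- by move=> x; apply: TV_le; exact: (HM' x).2.
by move=> x x'; apply: repl_step; [exact: (HM' x).1 | exact: (HM' x').1].
Qed.
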